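(* Let $(X,\rho)$ be an $F$-space and $(Y,d)$ a metric vector space with translation-invariant non-decreasing metric $d$. Let $T:X\to Y$ and $T_n:X\to Y$ ($n\in\mathbb{N}$) be continuous linear operators. The following are equivalent: (i) $T_nx\to Tx$ for every $x\in X$, but $\{T_n\}$ does not converge almost arbitrarily slowly to $T$; (ii) there exist $\{\varepsilon_n\}\searrow0$ and $r_0>0$ such that $(T_n-T)(B_\rho(0,r_0))\subseteq B_d(0,\varepsilon_n)$ for all $n\in\mathbb{N}$. In particular, if (i) holds then $\{T_n\}$ converges to $T$ in the topology of bounded convergence. Finally, if $X$ is locally bounded, then (i) and (ii) are equivalent to (iii) $\{T_n\}$ converges to $T$ in the topology of bounded convergence.
   Context: An $F$-space is a complete metric vector space with translation-invariant metric. $d$ is non-decreasing if $d(\alpha y,0)\le d(y,0)$ for $0\le\alpha\le1$. $B_\rho(x,r)=\{z:\rho(x,z)\le r\}$, similarly $B_d$. A sequence of operators $T_n$ converges almost arbitrarily slowly to $T$ if (C1) $\lim_n d(T_nx,Tx)=0$ for all $x\in X$ and (C2) for every non-increasing sequence $\{\varepsilon_n\}$ of nonnegative reals tending to $0$ there exists $x\in X$ with $d(T_nx,Tx)\ge\varepsilon_n$ for infinitely many $n$. The topology of bounded convergence is the topology of uniform convergence on bounded subsets of $X$, where $A\subseteq X$ is bounded if for every $r>0$ there is $\lambda>0$ with $A\subseteq\lambda B_\rho(0,r)$. $\{\varepsilon_n\}\searrow0$ means a non-increasing sequence of nonnegative reals converging to $0$. *)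

(* Defs.v *)
From HB Require Import structures.
From mathcomp Require Import all_boot all_order all_algebra.
From mathcomp Require Import reals.
Set Implicit Arguments. Unset Strict Implicit. Unset Printing Implicit Defensive.
Import Order.TTheory GRing.Theory Num.Theory.
Local Open Scope ring_scope.

Section Defs.
Variable R : realType.

Definition is_metric (V : Type) (rho : V -> V -> R) : Prop :=
  (forall x y, 0 <= rho x y) /\
  (forall x y, rho x y = 0 <-> x = y) /\
  (forall x y, rho x y = rho y x) /\
  (forall x y z, rho x z <= rho x y + rho y z).

Definition transl_inv (V : lmodType R) (rho : V -> V -> R) : Prop :=
  forall x y z, rho (x + z) (y + z) = rho x y.

Definition scale_continuous (V : lmodType R) (rho : V -> V -> R) : Prop :=
  forall (a : R) (x : V) (e : R), 0 < e -> exists2 del : R, 0 < del &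
    forall (b : R) (y : V), `|b - a| < del -> rho y x < del ->
      rho (b *: y) (a *: x) < e.

(* metric vector space with translation-invariant metric
   (addition is then automatically continuous) *)
Definition is_tinv_metric_vector_space (V : lmodType R) (rho : V -> V -> R) :=
  [/\ is_metric rho, transl_inv rho & scale_continuous rho].

Definition cauchy_seq (V : Type) (rho : V -> V -> R) (u : nat -> V) : Prop :=
  forall e : R, 0 < e -> exists N, forall m n, (N <= m)%N -> (N <= n)%N ->
    rho (u m) (u n) < e.

Definition converges_to (V : Type) (rho : V -> V -> R) (u : nat -> V) (l : V) :=
  forall e : R, 0 < e -> exists N, forall n, (N <= n)%N -> rho (u n) l < e.

Definition complete_metric (V : Type) (rho : V -> V -> R) : Prop :=
  forall u, cauchy_seq rho u -> exists l, converges_to rho u l.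

Definition is_Fspace (V : lmodType R) (rho : V -> V -> R) : Prop :=
  is_tinv_metric_vector_space rho /\ complete_metric rho.

Definition nondecreasing_metric (V : lmodType R) (d : V -> V -> R) : Prop :=
  forall (alpha : R) (y : V), 0 <= alpha <= 1 -> d (alpha *: y) 0 <= d y 0.

Definition cball (V : Type) (rho : V -> V -> R) (x : V) (r : R) : V -> Prop :=
  fun z => rho x z <= r.

Definition continuous_op (V W : Type) (rho : V -> V -> R) (d : W -> W -> R)
  (f : V -> W) : Prop :=
  forall x (e : R), 0 < e -> exists2 del : R, 0 < del &
    forall y, rho x y < del -> d (f x) (f y) < e.

Definition bounded_set (V : lmodType R) (rho : V -> V -> R) (A : V -> Prop) :=
  forall r : R, 0 < r -> exists2 lambda : R, 0 < lambda &
    forall a, A a -> exists2 z : V, cball rho 0 r z & a = lambda *: z.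

Definition locally_bounded (V : lmodType R) (rho : V -> V -> R) : Prop :=
  exists2 r : R, 0 < r & bounded_set rho (cball rho 0 r).

Definition decr_to_zero (eps : nat -> R) : Prop :=
  (forall n, 0 <= eps n) /\ (forall n, eps n.+1 <= eps n) /\
  (forall e : R, 0 < e -> exists N, forall n, (N <= n)%N -> eps n < e).

Definition pointwise_conv (V W : Type) (d : W -> W -> R)
  (Tn : nat -> V -> W) (T : V -> W) : Prop :=
  forall x, converges_to d (fun n => Tn n x) (T x).

Definition aas_conv (V W : Type) (d : W -> W -> R)
  (Tn : nat -> V -> W) (T : V -> W) : Prop :=
  pointwise_conv d Tn T /\
  forall eps : nat -> R, decr_to_zero eps ->
    exists x, forall N, exists2 n, (N <= n)%N & eps n <= d (Tn n x) (T x).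

(* convergence in the topology of bounded convergence, i.e. uniform
   convergence on bounded subsets of V *)
Definition bounded_conv (V W : lmodType R) (rho : V -> V -> R) (d : W -> W -> R)
  (Tn : nat -> V -> W) (T : V -> W) : Prop :=
  forall A, bounded_set rho A ->
    forall e : R, 0 < e -> exists N, forall n, (N <= n)%N ->
      forall x, A x -> d (Tn n x) (T x) < e.

End Defs.

(* Main.v *)
Require Import Defs.
From HB Require Import structures.
From mathcomp Require Import all_boot all_order all_algebra.
From mathcomp Require Import boolp classical_sets reals.
From mathcomp Require Import lra.
From Stdlib Require Classical_Prop.
Import Order.TTheory GRing.Theory Num.Theory.
Local Open Scope ring_scope.
Local Open Scope classical_set_scope.
Set Implicit Arguments. Unset Strict Implicit.
Section MF.
Variables (R : realType) (V : lmodType R) (m : V -> V -> R).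
Hypotheses (Hm : is_metric m) (Ht : transl_inv m).

Lemma m_ge0 x y : 0 <= m x y. Proof. by case: Hm. Qed.
Lemma m_sym x y : m x y = m y x. Proof. by case: Hm => _ [_ []]. Qed.
Lemma m_tri x y z : m x z <= m x y + m y z. Proof. by case: Hm => _ [_ [_]]. Qed.
Lemma m_xx x : m x x = 0. Proof. by case: Hm => _ [H _]; apply/H. Qed.

Lemma m_sub a b : m a b = m 0 (b - a).
Proof. by rewrite -(Ht 0 (b - a) a) add0r subrK. Qed.

Lemma m_add y z : m 0 (y + z) <= m 0 y + m 0 z.
Proof.
apply: le_trans (m_tri 0 z (y + z)) _.
by rewrite (m_sub z (y + z)) addrK addrC.
Qed.

Lemma m_opp y : m 0 (- y) = m 0 y.
Proof. by rewrite -(Ht 0 (-y) y) add0r addNr m_sym. Qed.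

Lemma m_muln y k : m 0 (y *+ k) <= m 0 y *+ k.
Proof.
elim: k => [|k IH]; first by rewrite !mulr0n m_xx.
rewrite !mulrS; apply: le_trans (m_add _ _) _; exact: lerD.
Qed.
End MF.
Section Main.
Variables (R : realType) (X Y : lmodType R) (rho : X -> X -> R) (d : Y -> Y -> R)
  (T : {linear X -> Y}) (Tn : nat -> {linear X -> Y}).
Hypotheses (mX : is_metric rho) (tX : transl_inv rho) (mY : is_metric d) (tY : transl_inv d)
  (sX : scale_continuous rho) (ndY : nondecreasing_metric d)
  (cT : continuous_op rho d T) (cTn : forall n, continuous_op rho d (Tn n)).

Definition S n x := Tn n x - T x.

Lemma SD n x y : S n (x + y) = S n x + S n y.
Proof. by rewrite /S (linearD (Tn n)) (linearD T) opprD addrACA. Qed.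
Lemma S0 n : S n 0 = 0.
Proof. by rewrite /S (linear0 (Tn n)) (linear0 T) subrr. Qed.
Lemma SN n x : S n (- x) = - S n x.
Proof. by rewrite /S (linearN (Tn n)) (linearN T) opprD. Qed.
Lemma SZ n a x : S n (a *: x) = a *: S n x.
Proof. by rewrite /S (linearZ_LR (Tn n)) (linearZ_LR T) scalerBr. Qed.

Lemma dTS n x : d (Tn n x) (T x) = d 0 (S n x).
Proof. by rewrite m_sym // m_sub // m_opp // opprB. Qed.

Lemma S_cont n e : 0 < e -> exists2 del, 0 < del &
  forall y, rho 0 y < del -> d 0 (S n y) < e.
Proof.
move=> e0; have e20 : 0 < e / 2 by rewrite divr_gt0.
have [d1 d10 H1] := cTn n 0 e20; have [d2 d20 H2] := cT 0 e20.
exists (Num.min d1 d2); first by rewrite lt_min d10 d20.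
move=> y; rewrite lt_min => /andP[y1 y2].
have := H1 _ y1; have := H2 _ y2; rewrite (linear0 T) (linear0 (Tn n)) => h2 h1.
apply: le_lt_trans (m_add mY tY _ _) _; rewrite m_opp //.
by rewrite [e](splitr e) ltrD.
Qed.

Definition U r := forall c, 0 < c -> exists N, forall n, (N <= n)%N ->
  forall x, rho 0 x <= r -> d 0 (S n x) <= c.

Definition cond_ii := exists eps : nat -> R, decr_to_zero eps /\
      exists2 r0 : R, 0 < r0 &
        forall n x, cball rho 0 r0 x -> cball d 0 (eps n) (Tn n x - T x).

Lemma L r : 0 < r -> U r -> cond_ii.
Proof.
move=> r0 HU.
have [N1 HN1] := HU 1 ltr01.
have hd : forall m, exists2 del, 0 < del &
  forall y, rho 0 y < del -> d 0 (S m y) < 1 by move=> m; exact: S_cont.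
pose del m := projT1 (cid2 (hd m)).
have del0 m : 0 < del m by rewrite /del; case: cid2.
have delP m y : rho 0 y < del m -> d 0 (S m y) < 1 by rewrite /del; case: cid2 => ? ? /= H; exact: H.
pose fix mn k := if k is k'.+1 then Num.min (mn k') (del k' / 2) else r.
have mn0 k : 0 < mn k.
  by elim: k => [|k IH] //=; rewrite lt_min IH divr_gt0.
have mnr k : mn k <= r.
  by elim: k => [|k IH] //=; rewrite ge_min IH.
have mndel k m : (m < k)%N -> mn k <= del m / 2.
  elim: k => [|k IH] //= mk; rewrite ge_min; move: mk; rewrite ltnS leq_eqVlt.
  case/orP => [/eqP -> | /IH ->]; first by rewrite lexx orbT.
  by [].
set r1 := mn N1.
have bnd n x : rho 0 x <= r1 -> d 0 (S n x) <= 1.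
  move=> hx; case: (ltnP n N1) => hn.
    apply/ltW/delP; apply: le_lt_trans hx _; apply: le_lt_trans (mndel _ _ hn) _.
    by rewrite ltr_pdivrMr // ltr_pMr // ltr1n.
  by apply: HN1 => //; apply: le_trans hx (mnr _).
pose E n := [set t | exists m x, (n <= m)%N /\ rho 0 x <= r1 /\ t = d 0 (S m x)].
have E0 n : E n 0.
  by exists n, 0; rewrite S0 m_xx // m_xx // (ltW (mn0 _)) leqnn.
have Eub n : ubound (E n) 1 by move=> t [m [x [_ [hx ->]]]]; exact: bnd.
have Ehs n : has_sup (E n) by split; [exists 0 | exists 1].
have Eup n t : E n t -> t <= sup (E n) by move=> Et; exact: sup_upper_bound.
exists (fun n => sup (E n)); split; last first.
  exists r1; first exact: mn0.
  by move=> n x hx; apply: Eup; exists n, x; rewrite leqnn hx.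
split; first by move=> n; exact: Eup.
split.
  move=> n; apply: ge_sup; first by exists 0.
  move=> t [m [x [hm [hx ->]]]]; apply: Eup; exists m, x; split => //.
  exact: ltnW.
move=> e e0; have e20 : 0 < e / 2 by rewrite divr_gt0.
have [N HN] := HU _ e20; exists N => n hn.
apply: le_lt_trans (_ : e / 2 < e); last by rewrite ltr_pdivrMr // ltr_pMr // ltr1n.
apply: ge_sup; first by exists 0.
move=> t [m [x [hm [hx ->]]]]; apply: HN; first exact: leq_trans hm.
exact: le_trans hx (mnr _).
Qed.


Lemma archi_nat (x : R) : exists k : nat, x < k%:R.
Proof.
exists (Num.Def.archi_bound `|x|); apply: le_lt_trans (ler_norm x) _.
exact: archi_boundP.
Qed.

Lemma inv_small (e : R) : 0 < e -> exists N, forall n, (N <= n)%N -> (n.+1%:R : R)^-1 < e.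
Proof.
move=> e0; have [k hk] := archi_nat e^-1; exists k => n hn.
rewrite -[e]invrK ltf_pV2 ?posrE ?invr_gt0 ?ltr0Sn //.
apply: lt_le_trans hk _; rewrite ler_nat; exact: leqW.
Qed.

Lemma absorb x r0 : 0 < r0 -> exists k : nat, (0 < k)%N /\ rho 0 ((k%:R)^-1 *: x) <= r0.
Proof.
move=> r00; have [del del0 H] := sX 0 x r00.
have [k hk] := archi_nat del^-1.
have k0 : (0 < k)%N.
  by rewrite -(ltr_nat R); apply: lt_trans hk; rewrite invr_gt0.
exists k; split => //; rewrite m_sym //; apply/ltW.
rewrite -[0 in X in rho _ X](scale0r x); apply: H; last by rewrite m_xx.
rewrite subr0 ger0_norm ?invr_ge0 ?ler0n //.
by rewrite -[del]invrK ltf_pV2 ?posrE ?invr_gt0 ?ltr0n.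
Qed.

Lemma D_natscale k y : d 0 (k%:R *: y) <= d 0 y *+ k.
Proof. by rewrite scaler_nat; exact: m_muln. Qed.

Section FromII.
Variables (eps : nat -> R) (r0 : R).
Hypotheses (dz : decr_to_zero eps) (r00 : 0 < r0)
  (hb : forall n x, cball rho 0 r0 x -> cball d 0 (eps n) (Tn n x - T x)).

Lemma Sbound x : exists k : nat, forall n, d 0 (S n x) <= eps n *+ k.
Proof.
have [k [k0 hk]] := absorb x r00; exists k => n.
have -> : x = k%:R *: ((k%:R)^-1 *: x).
  by rewrite scalerA divff ?scale1r // pnatr_eq0 -lt0n.
rewrite SZ; apply: le_trans (D_natscale _ _) _.
rewrite lerMn2r; apply/orP; right; exact: hb.
Qed.

Lemma ii_pw : pointwise_conv d (fun n => Tn n : X -> Y) T.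
Proof.
move=> x e e0; have [k hk] := Sbound x.
case: dz => _ [_ hz].
have ek : 0 < e / k.+1%:R by rewrite divr_gt0 ?ltr0Sn.
have [N HN] := hz _ ek; exists N => n hn; rewrite dTS.
apply: le_lt_trans (hk n) _.
have hh : eps n *+ k <= eps n *+ k.+1.
  by rewrite mulrS lerDr; case: dz => h _.
apply: le_lt_trans hh _.
by rewrite -mulr_natr -ltr_pdivlMr ?ltr0Sn // HN.
Qed.

Lemma ii_naas : ~ aas_conv d (fun n => Tn n : X -> Y) T.
Proof.
case: dz => ge0 [decr hz].
pose eps' n := Num.sqrt (eps n) + (n.+1%:R)^-1.
have dz' : decr_to_zero eps'.
  split; first by move=> n; rewrite addr_ge0 ?sqrtr_ge0 ?invr_ge0 ?ler0n.
  split.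
    move=> n; apply: lerD; first exact: ler_wsqrtr.
    by rewrite lef_pV2 ?posrE ?ltr0Sn // ler_nat.
  move=> e e0; have e20 : 0 < e / 2 by rewrite divr_gt0.
  have [N1 H1] := hz _ (mulr_gt0 e20 e20).
  have [N2 H2] := inv_small e20.
  exists (maxn N1 N2) => n; rewrite geq_max => /andP[h1 h2].
  rewrite [e](splitr e); apply: ltrD; last exact: H2.
  have := H1 _ h1; have := sqr_sqrtr (ge0 n); have := sqrtr_ge0 (eps n).
  move: (Num.sqrt (eps n)) => s; move: (eps n) => a; rewrite expr2 => s0 <-.
  by move=> h; nra.
case=> _ /(_ _ dz') [x hx].
have [k hk] := Sbound x.
pose K : R := k.+1%:R.
have K0 : 0 < K by rewrite ltr0Sn.
have KK : 0 < (K * K)^-1 by rewrite invr_gt0 mulr_gt0.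
have [N HN] := hz _ KK.
have [n hn hle] := hx N.
have h3 := HN _ hn.
have h3' : eps n * (K * K) < 1 by rewrite -ltr_pdivlMr ?mulr_gt0 // div1r.
have h2 := hk n; rewrite -mulr_natr in h2.
rewrite dTS /eps' in hle.
have i0 : 0 < (n.+1%:R : R)^-1 by rewrite invr_gt0 ltr0Sn.
have hKk : K = k%:R + 1 by rewrite /K natr1.
have k0 : 0 <= (k%:R : R) by rewrite ler0n.
move: hle; set s := (X in X + _ <= _) => hle.
have s0 : 0 <= s by rewrite /s sqrtr_ge0.
have hs : s * s = eps n by rewrite /s -expr2 sqr_sqrtr.
have a0 := ge0 n.
clear HN h3 hx hk dz' KK K0.
clearbody s.
move: hle h3' h2 i0 hKk k0 hs s0 a0.
move: (eps n) (d 0 (S n x)) ((n.+1%:R : R)^-1) (k%:R : R) K => a b i kk KK.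
move=> h1 h3 h2 i0 hK kk0 hs s0 a0; subst KK a.
nra.
Qed.

Lemma ii_iii : bounded_conv rho d (fun n => Tn n : X -> Y) T.
Proof.
move=> A hA e e0; have [lam lam0 hl] := hA _ r00.
have [k hk] := archi_nat lam.
have k0 : 0 < (k%:R : R) by apply: lt_trans hk.
case: dz => ge0 [_ hz].
have ek : 0 < e / k%:R by rewrite divr_gt0.
have [N HN] := hz _ ek; exists N => n hn a Aa.
have [z zb ->] := hl _ Aa.
rewrite dTS SZ.
have -> : lam *: S n z = (lam / k%:R) *: (k%:R *: S n z).
  by rewrite scalerA divfK // gt_eqF.
have hh : d 0 ((lam / k%:R) *: (k%:R *: S n z)) <= d 0 (k%:R *: S n z).
  rewrite m_sym // [X in _ <= X]m_sym //; apply: ndY.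
  rewrite divr_ge0 ?ler0n ?(ltW lam0) //= ler_pdivrMr // mul1r; exact: ltW.
apply: le_lt_trans hh _.
apply: le_lt_trans (D_natscale _ _) _.
have hh2 : d 0 (S n z) *+ k <= eps n *+ k by rewrite lerMn2r hb ?orbT.
apply: le_lt_trans hh2 _.
by rewrite -mulr_natr -ltr_pdivlMr // HN.
Qed.
End FromII.

Section Hump.
Variable eps : nat -> R.
Hypotheses (dz : decr_to_zero eps) (cplt : complete_metric rho)
  (pw : pointwise_conv d (fun n => Tn n : X -> Y) T)
  (H : forall r, 0 < r -> exists2 c, 0 < c & forall N, exists n, (N <= n)%N /\
         exists x, rho 0 x <= r /\ c < d 0 (S n x)).

Definition Pst k s r (p : X * nat * R) :=
  [/\ (k <= p.1.2)%N, rho 0 p.1.1 <= r, 0 < p.2, p.2 <= r / 2 &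
    forall y, rho 0 y < 4 * p.2 -> eps p.1.2 < d 0 (S p.1.2 (s + p.1.1 + y))].

Lemma step_ex k s r : exists p, 0 < r -> Pst k s r p.
Proof.
case: (lerP r 0) => hr.
  by exists (0, 0%N, 0).
have [c c0 Hc] := H hr.
have c40 : 0 < c / 4 by rewrite divr_gt0.
have c20 : 0 < c / 2 by rewrite divr_gt0.
have [N1 HN1] := pw s c40.
case: dz => ge0 [_ hz].
have [N2 HN2] := hz _ c20.
have [n [hn [x [hx hc]]]] := Hc (maxn k (maxn N1 N2)).
move: hn; rewrite !geq_max => /and3P[hk h1 h2].
have [del del0 Hd] := S_cont n c40.
exists (x, n, Num.min (r / 2) (del / 4)) => _; split => //=.
- by rewrite lt_min divr_gt0 // divr_gt0.
- by rewrite ge_min lexx.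
move=> y hy.
have hy' : rho 0 y < del.
  apply: lt_le_trans hy _; have : Num.min (r / 2) (del / 4) <= del / 4 by rewrite ge_min lexx orbT.
  move: (Num.min _ _) => m hm; lra.
have hSy := Hd _ hy'.
have hSs : d 0 (S n s) < c / 4 by rewrite -dTS; exact: HN1.
have he := HN2 _ h2.
have hsplit : S n x = S n (s + x + y) + - S n s + - S n y.
  by rewrite !SD (addrC (S n s) (S n x)) -(addrA (S n x) (S n s) (S n y)) (addrC (S n s) (S n y)) addrA !addrK.
have ht : d 0 (S n x) <= d 0 (S n (s + x + y)) + d 0 (S n s) + d 0 (S n y).
  rewrite hsplit; apply: le_trans (m_add mY tY _ _) _.
  rewrite m_opp //; apply: lerD => //.
  by apply: le_trans (m_add mY tY _ _) _; rewrite m_opp.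
move: ht hSy hSs he hc; move: (d 0 (S n _)) => a.
move: (d 0 (S n (s + x + y))) (d 0 (S n s)) (d 0 (S n y)) => b1 b2 b3.
move=> *; lra.
Qed.

Definition stepf k s r := projT1 (cid (step_ex k s r)).
Lemma stepP k s r : 0 < r -> Pst k s r (stepf k s r).
Proof. by rewrite /stepf; case: cid => p /= hp; exact: hp. Qed.

Fixpoint st k : X * R := if k is k'.+1 then
  ((st k').1 + (stepf k' (st k').1 (st k').2).1.1, (stepf k' (st k').1 (st k').2).2)
  else (0, 1).

Definition sk k := (st k).1.
Definition rk k := (st k).2.
Definition nk k := (stepf k (sk k) (rk k)).1.2.

Lemma rk_gt0 k : 0 < rk k.
Proof.
elim: k => [|k IH]; first by rewrite /rk /= ltr01.
by case: (stepP k (sk k) IH).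
Qed.

Lemma rkS k : rk k.+1 <= rk k / 2.
Proof. by case: (stepP k (sk k) (rk_gt0 k)). Qed.

Lemma dist1 k : rho (sk k) (sk k.+1) <= rk k.
Proof.
rewrite /sk /= m_sub // (addrC (st k).1) addrK.
by case: (stepP k (sk k) (rk_gt0 k)).
Qed.

Lemma distm k m : rho (sk k) (sk (k + m)) <= 2 * rk k - 2 * rk (k + m).
Proof.
elim: m => [|m IH]; first by rewrite addn0 m_xx // subrr.
apply: le_trans (m_tri mX _ (sk (k + m)) _) _.
rewrite addnS; have h1 := dist1 (k + m); have h2 := rkS (k + m).
lra.
Qed.

Lemma distm' k m : rho (sk k) (sk (k + m)) <= 2 * rk k.
Proof.
apply: le_trans (distm k m) _; have := rk_gt0 (k + m); lra.
Qed.

Lemma rk_small k : rk k * k.+1%:R <= 1.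
Proof.
elim: k => [|k IH]; first by rewrite /rk /= mul1r.
have h := rkS k; have h0 := rk_gt0 k.
have hb := rk_gt0 k.+1.
rewrite -!natr1 in IH *.
have hk : 0 <= (k%:R : R) by rewrite ler0n.
move: (rk k) (rk k.+1) (k%:R : R) h h0 IH hk hb => a b kk *.
nra.
Qed.

Lemma rk_lt e : 0 < e -> exists N, rk N < e.
Proof.
move=> e0; have [N HN] := inv_small e0; exists N.
have : rk N <= 1 / N.+1%:R by rewrite ler_pdivlMr ?ltr0Sn // rk_small.
by rewrite div1r => h; apply: le_lt_trans h (HN _ (leqnn N)).
Qed.

Lemma sk_cauchy : cauchy_seq rho sk.
Proof.
move=> e e0; have e40 : 0 < e / 4 by rewrite divr_gt0.
have [N HN] := rk_lt e40; exists N => m n hm hn.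
apply: le_lt_trans (m_tri mX _ (sk N) _) _.
have h1 := distm' N (m - N); have h2 := distm' N (n - N).
rewrite subnKC // in h1; rewrite subnKC // in h2.
rewrite m_sym // in h1; lra.
Qed.

Lemma hump : exists x, forall N, exists2 n, (N <= n)%N & eps n <= d (Tn n x) (T x).
Proof.
have [x hx] := cplt sk_cauchy.
exists x => N; exists (nk N).
  by case: (stepP N (sk N) (rk_gt0 N)).
rewrite dTS; apply: ltW.
case: (stepP N (sk N) (rk_gt0 N)) => _ _ _ _ /(_ (x - sk N.+1)).
have e : sk N.+1 = sk N + (stepf N (sk N) (rk N)).1.1 by [].
have -> : sk N + (stepf N (sk N) (rk N)).1.1 + (x - sk N.+1) = x.
  by rewrite -e addrC subrK.
apply.
have -> : (stepf N (sk N) (rk N)).2 = rk N.+1 by [].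
rewrite -m_sub //.
have r0 := rk_gt0 N.+1.
have [M HM] := hx _ r0.
apply: le_lt_trans (m_tri mX _ (sk (maxn M N.+1)) _) _.
have h1 := distm' N.+1 (maxn M N.+1 - N.+1).
rewrite subnKC ?leq_maxr // in h1.
have h2 := HM _ (leq_maxl M N.+1).
lra.
Qed.

End Hump.
Lemma i_ii (cplt : complete_metric rho) :
  pointwise_conv d (fun n => Tn n : X -> Y) T /\ ~ aas_conv d (fun n => Tn n : X -> Y) T ->
  cond_ii.
Proof.
case=> pw naas; apply: Classical_Prop.NNPP => nii; apply: naas; split => // eps dz.
apply: (hump dz cplt pw) => r r0.
have nU : ~ U r by move=> hU; apply: nii; exact: (L r0 hU).
apply: Classical_Prop.NNPP => hne; apply: nU => c c0.
apply: Classical_Prop.NNPP => hN; apply: hne; exists c => // N.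
apply: Classical_Prop.NNPP => hn; apply: hN; exists N => n hn' x hx.
rewrite leNgt; apply/negP => hlt; apply: hn; exists n; split => //.
by exists x.
Qed.

Lemma iii_ii : locally_bounded rho -> bounded_conv rho d (fun n => Tn n : X -> Y) T -> cond_ii.
Proof.
case=> r r0 hb hc; apply: (L r0) => c c0.
have [N HN] := hc _ hb c c0; exists N => n hn x hx.
by rewrite -dTS; apply/ltW; apply: HN.
Qed.

Lemma all_in (cplt : complete_metric rho) :
  let cond_i := pointwise_conv d (fun n => Tn n : X -> Y) T /\
                ~ aas_conv d (fun n => Tn n : X -> Y) T in
  let cond_ii := exists eps : nat -> R, decr_to_zero eps /\
      exists2 r0 : R, 0 < r0 &
        forall n x, cball rho 0 r0 x -> cball d 0 (eps n) (Tn n x - T x) in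
  let cond_iii := bounded_conv rho d (fun n => Tn n : X -> Y) T in
  [/\ cond_i <-> cond_ii,
      cond_i -> cond_iii &
      locally_bounded rho -> (cond_i <-> cond_iii) /\ (cond_ii <-> cond_iii)].
Proof.
move=> c1 c2 c3.
have i2 : c1 -> c2 by exact: i_ii.
have i1 : c2 -> c1.
  by case=> eps [dz [r0 r00 hb]]; split; [exact: ii_pw hb | exact: ii_naas hb].
have i3 : c2 -> c3 by case=> eps [dz [r0 r00 hb]]; exact: ii_iii hb.
split.
- by split.
- by move=> h; apply: i3; apply: i2.
move=> lb; have i32 : c3 -> c2 by exact: iii_ii.
split; split => h.
- exact: i3 (i2 h).
- exact: i1 (i32 h).
- exact: i3 h.
- exact: i32 h.
Qed.

End Main.

Unset Implicit Arguments.
Local Close Scope classical_set_scope.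

Theorem mainTheorem10 (R : realType) (X Y : lmodType R)
  (rho : X -> X -> R) (d : Y -> Y -> R)
  (T : {linear X -> Y}) (Tn : nat -> {linear X -> Y}) :
  is_Fspace rho ->
  is_tinv_metric_vector_space d ->
  nondecreasing_metric d ->
  continuous_op rho d T ->
  (forall n, continuous_op rho d (Tn n)) ->
  let cond_i := pointwise_conv d (fun n => Tn n : X -> Y) T /\
                ~ aas_conv d (fun n => Tn n : X -> Y) T in
  let cond_ii := exists eps : nat -> R, decr_to_zero eps /\
      exists2 r0 : R, 0 < r0 &
        forall n x, cball rho 0 r0 x -> cball d 0 (eps n) (Tn n x - T x) in
  let cond_iii := bounded_conv rho d (fun n => Tn n : X -> Y) T in
  [/\ cond_i <-> cond_ii,
      cond_i -> cond_iii &
      locally_bounded rho -> (cond_i <-> cond_iii) /\ (cond_ii <-> cond_iii)].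
Proof.
move=> [[mX tX sX] cplt] [mY tY _] nd cT cTn.
exact: (all_in mX tX mY tY sX nd cT cTn cplt).
Qed.
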